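(* Let $\theta=9/10$, $k=6$ and $d\ge1$. Let $x\in\{0,1\}^{L_d}$ be such that there are at least $4$ children $i$ of the root with $$\mathbb{P}\big[X^{(1)}_i=1\ \big|\ X^{(d)}(L_{d-1}(i))=x(L_{d-1}(i))\big]\ge 0.95.$$ Then $\mathbb{P}[X^{(0)}=1\mid X^{(d)}=x]\ge 19/20$.
   Context: Broadcast (Ising) tree model: complete $k$-ary tree of depth $d$ with root $\rho$; $L_r$ = vertices at depth $r$; for a vertex $i$, $L_s(i)$ = its descendants $s$ levels below it, and $x(A)$ denotes the restriction of $x$ to the index set $A$. $\sigma_\rho$ uniform on $\{0,1\}$; each child $v$ of $u$ independently has $\sigma_v=\sigma_u$ with probability $(1+\theta)/2$ and $1-\sigma_u$ otherwise; $X^{(r)}=(\sigma_v)_{v\in L_r}$. *)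

(* Defs.v *)
From mathcomp Require Import all_boot all_order all_algebra.
Set Implicit Arguments. Unset Strict Implicit. Unset Printing Implicit Defensive.
Import Order.TTheory GRing.Theory Num.Theory.
Local Open Scope ring_scope.

(* Vertices: the vertex at depth r (0 <= r <= d) with index j (0 <= j < k^r),
   numbered breadth-first: the root is (0,0), and the children of (r,j) are
   (r+1, k*j + c) for c < k; hence the parent of (r+1, j) is (r, j %/ k).
   A configuration stores one bit for each pair (r, j) in 'I_d.+1 * 'I_(k^d);
   entries with j >= k^r do not correspond to vertices and are required to be
   false (see [valid]), so valid configurations are in bijection with
   {0,1}^(vertices). *)
Definition conf (k d : nat) := {ffun 'I_d.+1 * 'I_(k ^ d) -> bool}.

(* value of the configuration at (r, j) (false if out of range) *)
Definition lk (k d : nat) (s : conf k d) (r j : nat) : bool :=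
  match (insub r : option 'I_d.+1), (insub j : option 'I_(k ^ d)) with
  | Some r', Some j' => s (r', j')
  | _, _ => false
  end.

Definition valid (k d : nat) (s : conf k d) : bool :=
  [forall p : 'I_d.+1 * 'I_(k ^ d), (k ^ p.1 <= p.2)%N ==> ~~ s p].

(* Probability of the configuration s under the broadcast process:
   root uniform, each edge keeps the parent's bit w.p. (1+theta)/2. *)
Definition weight (R : fieldType) (theta : R) (k d : nat) (s : conf k d) : R :=
  if valid s then
    2^-1 * \prod_(r < d) \prod_(j < k ^ d | (j < k ^ r.+1)%N)
       (if lk s r.+1 j == lk s r (j %/ k) then (1 + theta) / 2 else (1 - theta) / 2)
  else 0.

Definition Pr (R : fieldType) (theta : R) (k d : nat) (A : pred (conf k d)) : R :=
  \sum_(s : conf k d | A s) weight theta s.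

Definition condPr (R : fieldType) (theta : R) (k d : nat)
    (A B : pred (conf k d)) : R :=
  Pr theta [pred s | A s && B s] / Pr theta B.

Definition leaves_eq (k d : nat) (x : {ffun 'I_(k ^ d) -> bool}) : pred (conf k d) :=
  [pred s | [forall j : 'I_(k ^ d), lk s d j == x j]].

(* X^(d)(L_{d-1}(i)) = x(L_{d-1}(i)) for the child i of the root (vertex (1,i)):
   its descendants at depth d are the leaves j with j %/ k^(d-1) = i. *)
Definition subtree_leaves_eq (k d : nat) (x : {ffun 'I_(k ^ d) -> bool}) (i : nat)
  : pred (conf k d) :=
  [pred s | [forall j : 'I_(k ^ d), (j %/ k ^ d.-1 == i)%N ==> (lk s d j == x j)]].

Definition vertex_one (k d : nat) (r j : nat) : pred (conf k d) :=
  [pred s | lk s r j].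
Arguments vertex_one k d r j : clear implicits.

(* Main.v *)
Require Import Defs.
From mathcomp Require Import all_boot all_order all_algebra ring lra.
Set Implicit Arguments. Unset Strict Implicit. Unset Printing Implicit Defensive.
Import Order.TTheory GRing.Theory Num.Theory.
Local Open Scope ring_scope.


Lemma prod_option (R : comNzRingType) (I : finType) (F : option I -> R) :
  \prod_(o : option I) F o = F None * \prod_(i : I) F (Some i).
Proof.
rewrite (bigD1 None) //=; congr (_ * _).
rewrite (reindex_omap Some id) //=; last by case.
by apply: eq_bigl => i; rewrite eqxx.
Qed.

Lemma factor (R : comNzRingType) (T I : finType) (blk : T -> I)
  (G : I -> {ffun T -> bool} -> R) :
  (forall i (s s' : {ffun T -> bool}), (forall p, blk p = i -> s p = s' p) -> G i s = G i s') ->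
  \sum_(s : {ffun T -> bool}) \prod_i G i s =
  \prod_i \sum_(t : {ffun T -> bool} | [forall p, (blk p != i) ==> ~~ t p]) G i t.
Proof.
move=> loc.
rewrite (eq_bigr (fun i => \sum_(t : {ffun T -> bool})
   (if [forall p, (blk p != i) ==> ~~ t p] then G i t else 0))); last first.
  by move=> i _; rewrite big_mkcond.
rewrite bigA_distr_bigA /=.
set Z := fun i (t : {ffun T -> bool}) => [forall p, (blk p != i) ==> ~~ t p].
rewrite (bigID (fun f : {ffun I -> {ffun T -> bool}} => [forall i, Z i (f i)])) /=.
rewrite [X in _ = _ + X]big1 ?addr0; last first.
  move=> f /forallPn [i Hi]; rewrite (bigD1 i) //= ifN ?mul0r //.
set restr := fun s : {ffun T -> bool} => [ffun i => [ffun p => (blk p == i) && s p]].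
set glue := fun f : {ffun I -> {ffun T -> bool}} => [ffun p => f (blk p) p].
rewrite (reindex_onto restr glue); last first.
  move=> f Hf; apply/ffunP => i; apply/ffunP => p; rewrite !ffunE.
  have/forallP/(_ p) := forallP Hf i.
  case: eqP => [<-|] /= _ //.
  by move/negbTE ->.
rewrite [RHS](eq_bigl predT); last first.
  move=> s; have -> : glue (restr s) = s.
    by apply/ffunP => p; rewrite !ffunE eqxx.
  rewrite eqxx andbT; apply/forallP => i; apply/forallP => p.
  by rewrite !ffunE; apply/implyP => /negbTE ->.
apply: eq_bigr => s _; apply: eq_bigr => i _.
rewrite ifT.
  by apply: loc => p hp; rewrite !ffunE hp eqxx.
by apply/forallP => p; rewrite !ffunE; apply/implyP => /negbTE ->.
Qed.

Definition ed (R : fieldType) (th : R) (a b : bool) : R :=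
  if a == b then (1 + th) / 2 else (1 - th) / 2.

Definition blk (n : nat) (p : 'I_n.+2 * 'I_(6 ^ n.+1)) : option 'I_6 :=
  if (0 < p.1)%N && (p.2 < 6 ^ p.1)%N then insub (p.2 %/ 6 ^ p.1.-1)%N else None.

Definition Esub (R : fieldType) (th : R) (n : nat) (i : nat) (s : conf 6 n.+1) : R :=
  \prod_(r < n) \prod_(j < 6 ^ n.+1 | (j < 6 ^ r.+2)%N && (j %/ 6 ^ r.+1 == i)%N)
      ed th (lk s r.+2 j) (lk s r.+1 (j %/ 6)).

Lemma weightE (R : fieldType) (th : R) (n : nat) (s : conf 6 n.+1) :
  valid s ->
  weight th s = 2^-1 * \prod_(i < 6) (ed th (lk s 1 i) (lk s 0 0) * Esub th i s).
Proof.
move=> vs; rewrite /weight vs; congr (_ * _).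
rewrite big_ord_recl /= big_split /=; congr (_ * _).
  rewrite -(big_ord_widen (6 ^ n.+1) (fun j => ed th (lk s 1 j) (lk s 0 (j %/ 6)))); last first.
    by rewrite leq_pexp2l.
  by apply: eq_bigr => i _; rewrite divn_small.
rewrite /Esub exchange_big /=; apply: eq_bigr => r _.
rewrite (partition_big (fun j : 'I_(6 ^ n.+1) => (inord (j %/ 6 ^ r.+1) : 'I_6)) predT) //=.
apply: eq_bigr => i _; apply: eq_bigl => j.
case hj: (j < 6 ^ r.+2)%N => //=.
have hlt : (j %/ 6 ^ r.+1 < 6)%N by rewrite ltn_divLR ?expn_gt0 // -expnSr.
apply/eqP/eqP => [<-|H]; first by rewrite inordK.
by apply/val_inj; rewrite /= inordK // H.
Qed.

Lemma lkE n (s : conf 6 n.+1) r j (hr : (r < n.+2)%N) (hj : (j < 6 ^ n.+1)%N) :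
  lk s r j = s (Ordinal hr, Ordinal hj).
Proof. by rewrite /lk insubT /= insubT. Qed.

Lemma lk_loc_some n (i : 'I_6) (s s' : conf 6 n.+1) r j :
  (forall p, blk p = Some i -> s p = s' p) ->
  (0 < r)%N -> (j < 6 ^ r)%N -> (j %/ 6 ^ r.-1)%N = i ->
  lk s r j = lk s' r j.
Proof.
move=> H r0 jr ji; rewrite /lk.
case: insubP => [r' _ er|] //; case: insubP => [j' _ ej|] //.
apply: H; rewrite /blk /= er ej r0 jr /= ji; exact: valK.
Qed.

Lemma blk_none_cases n (p : 'I_n.+2 * 'I_(6 ^ n.+1)) :
  blk p = None -> ((p.1 == 0 :> nat) && (p.2 == 0 :> nat)) || (6 ^ p.1 <= p.2)%N.
Proof.
rewrite /blk; case: p => [r j] /=.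
case: (posnP r) => [->|r0] /=.
  by rewrite expn0; case: (nat_of_ord j) => [|m].
rewrite leqNgt; case: ltnP => //= jr.
case: insubP => // /negP []; rewrite ltn_divLR ?expn_gt0 //.
by rewrite -expnS prednK.
Qed.

Lemma blk_some_pos n (p : 'I_n.+2 * 'I_(6 ^ n.+1)) i :
  blk p = Some i -> (0 < p.1)%N.
Proof. by rewrite /blk; case: (0 < p.1)%N. Qed.

Definition Zs n (o : option 'I_6) (t : conf 6 n.+1) : bool :=
  [forall p, (blk p != o) ==> ~~ t p].

Lemma Esub_loc (R : fieldType) (th : R) n (i : 'I_6) (s s' : conf 6 n.+1) :
  (forall p, blk p = Some i -> s p = s' p) -> Esub th i s = Esub th i s'.
Proof.
move=> H; apply: eq_bigr => r _; apply: eq_bigr => j /andP [jr /eqP ji].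
have r1 : (r.+1 < n.+1)%N by rewrite ltnS.
congr ed; apply: (lk_loc_some H) => //.
- by rewrite ltn_divLR // -expnSr.
- by rewrite /= -divnMA -expnS.
Qed.

Lemma valid_loc n (s s' : conf 6 n.+1) :
  (forall p, blk p = None -> s p = s' p) -> valid s = valid s'.
Proof.
move=> H; apply: eq_forallb => p; case: leqP => //= hp.
rewrite H // /blk; move: hp; rewrite leqNgt => /negbTE ->; by rewrite andbF.
Qed.

Lemma lk00_loc n (s s' : conf 6 n.+1) :
  (forall p, blk p = None -> s p = s' p) -> lk s 0 0 = lk s' 0 0.
Proof.
move=> H; have h0 : (0 < 6 ^ n.+1)%N by rewrite expn_gt0.
by rewrite !(lkE _ _ h0) H.
Qed.

Lemma none_sum (R : fieldType) n (b : bool) :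
  \sum_(t : conf 6 n.+1 | Zs None t)
     (if valid t && (lk t 0 0 == b) then (2^-1 : R) else 0) = 2^-1.
Proof.
have h0 : (0 < 6 ^ n.+1)%N by rewrite expn_gt0.
set t0 : conf 6 n.+1 := [ffun p : 'I_n.+2 * 'I_(6 ^ n.+1) => b && (p.1 == 0 :> nat) && (p.2 == 0 :> nat)].
rewrite -big_mkcondr /= (eq_bigl (pred1 t0)) ?big_pred1_eq // => t /=.
apply/idP/eqP => [/andP [/forallP Z /andP [/forallP V /eqP L]]|->].
- apply/ffunP => p; rewrite ffunE.
  case e: (blk p) => [i|].
    have := Z p; rewrite e /= => /negbTE ->.
    by have := blk_some_pos e; rewrite lt0n => /negbTE ->; rewrite andbF.
  case/orP: (blk_none_cases e) => [/andP [/eqP e1 /eqP e2]| hp].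
    case: p e e1 e2 => [[r hr] [j hj]] /= _ e1 e2; subst r j.
    by rewrite -L (lkE _ hr hj) /= !andbT.
  have := V p; rewrite hp /= => /negbTE ->.
  move: hp; case: eqP => [->|_ _]; last by rewrite andbF.
  by case: eqP => [->|_ _]; rewrite ?andbF.
- apply/andP; split; last (apply/andP; split).
  + apply/forallP => p; rewrite ffunE; apply/implyP.
    case: eqP => [//|hb _].
    case: eqP => [e1|]; last by rewrite andbF.
    by exfalso; apply: hb; rewrite /blk e1.
  + apply/forallP => p; rewrite ffunE; apply/implyP.
    case: eqP => [->|_ _]; last by rewrite andbF.
    by case: eqP => [->|_ _]; rewrite ?andbF.
  + by rewrite (lkE _ _ h0) ffunE /= !andbT.
Qed.

Lemma PrF (R : fieldType) (th : R) n (b : bool) (phi : 'I_6 -> pred (conf 6 n.+1)) :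
  (forall i (s s' : conf 6 n.+1), (forall p, blk p = Some i -> s p = s' p) ->
     phi i s = phi i s') ->
  \sum_(s : conf 6 n.+1 | (lk s 0 0 == b) && [forall i, phi i s]) weight th s =
  2^-1 * \prod_(i < 6) \sum_(t : conf 6 n.+1 | Zs (Some i) t && phi i t)
                          (ed th (lk t 1 i) b * Esub th i t).
Proof.
move=> phiL.
pose G (o : option 'I_6) (s : conf 6 n.+1) : R := match o with
  | None => if valid s && (lk s 0 0 == b) then 2^-1 else 0
  | Some i => if phi i s then ed th (lk s 1 i) b * Esub th i s else 0 end.
transitivity (\sum_(s : conf 6 n.+1) \prod_o G o s).
  rewrite big_mkcond; apply: eq_bigr => s _.
  rewrite prod_option /=.
  case vs: (valid s); last by rewrite /weight vs if_same mul0r.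
  rewrite (weightE _ vs) /=.
  case: eqP => [<-|] /=; last by rewrite mul0r.
  case: (boolP [forall i, phi i s]) => [/forallP allp| /forallPn [i ni]].
    by congr (_ * _); apply: eq_bigr => i _; rewrite allp.
  by rewrite (bigD1 i) //= (negbTE ni) mul0r mulr0.
rewrite (@factor _ _ _ (@blk n) G); last first.
  case=> [i|] s s' H /=.
    rewrite (phiL i s s' H) (Esub_loc th H) (lk_loc_some H) //.
    by rewrite divn1.
  by rewrite (valid_loc H) (lk00_loc H).
rewrite prod_option /= -/(Zs None _) none_sum; congr (_ * _).
by apply: eq_bigr => i _; rewrite big_mkcondr.
Qed.

Definition K (R : fieldType) (th : R) n (i : 'I_6) (c : bool) (ps : pred (conf 6 n.+1)) : R :=
  \sum_(t : conf 6 n.+1 | Zs (Some i) t && ps t && (lk t 1 i == c)) Esub th i t.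

Lemma H_split (R : fieldType) (th : R) n (i : 'I_6) b (ps : pred (conf 6 n.+1)) :
  \sum_(t : conf 6 n.+1 | Zs (Some i) t && ps t) ed th (lk t 1 i) b * Esub th i t =
  ed th true b * K th i true ps + ed th false b * K th i false ps.
Proof.
rewrite (bigID (fun t => lk t 1 i)) /= /K !big_distrr /=; congr (_ + _).
  by apply: eq_big => [t|t /andP [_ ->]] //; rewrite eqb_id.
by apply: eq_big => [t|t /andP [_ /negbTE ->]] //; rewrite eqbF_neg.
Qed.

Lemma H_child (R : fieldType) (th : R) n (i : 'I_6) b c (ps : pred (conf 6 n.+1)) :
  \sum_(t : conf 6 n.+1 | Zs (Some i) t && ((lk t 1 i == c) && ps t))
     ed th (lk t 1 i) b * Esub th i t = ed th c b * K th i c ps.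
Proof.
rewrite /K big_distrr /=.
apply: eq_big => [t|t /andP [_ /andP [/eqP -> _]]] //.
by rewrite -!andbA [(lk t 1 i == c) && _]andbC.

Qed.

Definition fl n (i : 'I_6) (t : conf 6 n.+1) : conf 6 n.+1 :=
  [ffun p => if blk p == Some i then ~~ t p else t p].

Lemma flK n i : involutive (@fl n i).
Proof. by move=> t; apply/ffunP => p; rewrite !ffunE; case: (blk p == Some i); rewrite ?negbK. Qed.

Lemma lk_fl n (i : 'I_6) (t : conf 6 n.+1) r j :
  (0 < r)%N -> (r < n.+2)%N -> (j < 6 ^ r)%N -> (j %/ 6 ^ r.-1)%N = i ->
  lk (fl i t) r j = ~~ lk t r j.
Proof.
move=> r0 rn jr ji.
have hj : (j < 6 ^ n.+1)%N.
  by apply: (leq_trans jr); rewrite leq_pexp2l.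
rewrite !(lkE _ rn hj) ffunE /blk /= r0 jr /= ji valK eqxx //.
Qed.

Lemma Zs_fl n (i : 'I_6) (t : conf 6 n.+1) : Zs (Some i) (fl i t) = Zs (Some i) t.
Proof.
apply: eq_forallb => p; rewrite ffunE.
by case: eqP.
Qed.

Lemma Esub_fl (R : fieldType) (th : R) n (i : 'I_6) (t : conf 6 n.+1) :
  Esub th i (fl i t) = Esub th i t.
Proof.
apply: eq_bigr => r _; apply: eq_bigr => j /andP [jr /eqP ji].
have r1 : (r.+1 < n.+1)%N by rewrite ltnS.
have j6 : (j %/ 6 < 6 ^ r.+1)%N by rewrite ltn_divLR // -expnSr.
have ji' : (j %/ 6 %/ 6 ^ r.+1.-1)%N = i by rewrite /= -divnMA -expnS.
rewrite /ed (lk_fl _ _ _ jr) // ?(lk_fl _ _ _ j6 ji') ?(inj_eq negb_inj) //.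
by rewrite ltnS ltnW.
Qed.

Lemma K_flip (R : fieldType) (th : R) n (i : 'I_6) :
  @K R th n i true xpredT = @K R th n i false xpredT.
Proof.
rewrite /K (reindex_inj (inv_inj (@flK n i))) /=.
apply: eq_big => [t|t _]; last exact: Esub_fl.
rewrite Zs_fl (lk_fl _ (ltn0Sn _)) //; last by rewrite divn1.
by case: (lk t 1 i).
Qed.

Lemma ed_sum1 (R : numFieldType) (th : R) c : ed th c true + ed th c false = 1.
Proof. by rewrite /ed; case: c => /=; field. Qed.

Lemma ed_sum2 (R : numFieldType) (th : R) b : ed th true b + ed th false b = 1.
Proof. by rewrite /ed; case: b => /=; field. Qed.

Lemma sub_loc n (x : {ffun 'I_(6 ^ n.+1) -> bool}) (i : 'I_6) (s s' : conf 6 n.+1) :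
  (forall p, blk p = Some i -> s p = s' p) ->
  subtree_leaves_eq x i s = subtree_leaves_eq x i s'.
Proof.
move=> H; apply: eq_forallb => j; case: eqP => //= ji.
by rewrite (lk_loc_some H).
Qed.

Lemma child_loc n (i : 'I_6) (s s' : conf 6 n.+1) :
  (forall p, blk p = Some i -> s p = s' p) -> lk s 1 i = lk s' 1 i.
Proof. by move=> H; rewrite (lk_loc_some H) // divn1. Qed.

Lemma ed_gt0 (R : realFieldType) (th : R) a b :
  -1 < th < 1 -> 0 < ed th a b.
Proof. by move=> /andP [h1 h2]; rewrite /ed; case: (a == b); lra. Qed.

Lemma Esub_gt0 (R : realFieldType) (th : R) n i (t : conf 6 n.+1) :
  -1 < th < 1 -> 0 < Esub th i t.
Proof.
move=> h; apply: prodr_gt0 => r _; apply: prodr_gt0 => j _; exact: ed_gt0.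
Qed.

Lemma K_ge0 (R : realFieldType) (th : R) n i c (ps : pred (conf 6 n.+1)) :
  -1 < th < 1 -> 0 <= K th i c ps.
Proof. by move=> h; apply: sumr_ge0 => t _; apply/ltW/Esub_gt0. Qed.

Lemma Ksub_pos (R : realFieldType) (th : R) n (x : {ffun 'I_(6 ^ n.+1) -> bool}) (i : 'I_6) :
  -1 < th < 1 ->
  0 < K th i true (subtree_leaves_eq x i) + K th i false (subtree_leaves_eq x i).
Proof.
move=> h.
have -> : K th i true (subtree_leaves_eq x i) + K th i false (subtree_leaves_eq x i)
   = \sum_(t : conf 6 n.+1 | Zs (Some i) t && subtree_leaves_eq x i t) Esub th i t.
  rewrite [RHS](bigID (fun t => lk t 1 i)) /=; congr (_ + _).
    by apply: eq_bigl => t; rewrite eqb_id.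
  by apply: eq_bigl => t; rewrite eqbF_neg.
pose t1 : conf 6 n.+1 := [ffun p : 'I_n.+2 * 'I_(6 ^ n.+1) =>
   (blk p == Some i) && (p.1 == n.+1 :> nat) && x p.2].
have Zt1 : Zs (Some i) t1.
  by apply/forallP => p; rewrite ffunE; apply/implyP => /negbTE ->.
have St1 : subtree_leaves_eq x i t1.
  apply/forallP => j; apply/implyP => /eqP ji.
  have hr : (n.+1 < n.+2)%N by [].
  rewrite (lkE _ hr (ltn_ord j)) ffunE /= eqxx andbT.
  have -> : Ordinal (ltn_ord j) = j by apply: val_inj.
  rewrite /blk /= ltn_ord ji valK eqxx //.
rewrite (bigD1 t1) ?Zt1 ?St1 //=.
apply: (lt_le_trans (Esub_gt0 i t1 h)); rewrite lerDl.
by apply: sumr_ge0 => t _; apply/ltW/Esub_gt0.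
Qed.

Lemma leaves_split n (x : {ffun 'I_(6 ^ n.+1) -> bool}) (s : conf 6 n.+1) :
  leaves_eq x s = [forall i : 'I_6, subtree_leaves_eq x i s].
Proof.
apply/forallP/forallP => [H i|H j].
  by apply/forallP => j; apply/implyP => _; exact: H.
have hi : (j %/ 6 ^ n < 6)%N by rewrite ltn_divLR ?expn_gt0 //; apply: leq_trans (ltn_ord j) _; rewrite expnS.
by have /forallP/(_ j)/implyP := H (Ordinal hi); apply.
Qed.

Lemma Pr_root (R : realFieldType) (th : R) n (x : {ffun 'I_(6 ^ n.+1) -> bool}) b :
  \sum_(s : conf 6 n.+1 | (lk s 0 0 == b) && leaves_eq x s) weight th s =
  2^-1 * \prod_(i < 6) (ed th true b * K th i true (subtree_leaves_eq x i)
                        + ed th false b * K th i false (subtree_leaves_eq x i)).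
Proof.
rewrite (eq_bigl (fun s => (lk s 0 0 == b) && [forall i : 'I_6, subtree_leaves_eq x i s])); last first.
  by move=> s; rewrite leaves_split.
rewrite (@PrF R th n b (fun i => subtree_leaves_eq x i)); last by move=> i s s' H; apply: sub_loc.
by congr (_ * _); apply: eq_bigr => i _; rewrite H_split.
Qed.

Lemma forall_if (i : 'I_6) (A : bool) : [forall j : 'I_6, if j == i then A else true] = A.
Proof.
apply/forallP/idP => [H|a j]; first by have := H i; rewrite eqxx.
by case: eqP.
Qed.

Lemma Pr_child_b (R : realFieldType) (th : R) n (x : {ffun 'I_(6 ^ n.+1) -> bool}) (i : 'I_6) c b :
  \sum_(s : conf 6 n.+1 | (lk s 0 0 == b) &&
        [forall j : 'I_6, if j == i then (lk s 1 i == c) && subtree_leaves_eq x i s else true])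
     weight th s =
  2^-1 * (ed th c b * K th i c (subtree_leaves_eq x i)) *
     \prod_(j < 6 | j != i) @K R th n j true xpredT.
Proof.
rewrite (@PrF R th n b (fun j s => if j == i then (lk s 1 i == c) && subtree_leaves_eq x i s else true)); last first.
  move=> j s s' H /=; case: eqP => [ji|//]; subst j.
  by rewrite (child_loc H) (sub_loc _ H).
rewrite (bigD1 i) //= -mulrA; congr (_ * (_ * _)).
  by rewrite (eq_bigl (fun t => Zs (Some i) t && ((lk t 1 i == c) && subtree_leaves_eq x i t)))
       ?H_child // => t; rewrite eqxx.
apply: eq_bigr => j ji.
rewrite (eq_bigl (fun t => Zs (Some j) t && xpredT t)); last by move=> t; rewrite (negbTE ji).
by rewrite H_split -K_flip -mulrDl ed_sum2 mul1r.
Qed.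

Lemma Pr_child (R : realFieldType) (th : R) n (x : {ffun 'I_(6 ^ n.+1) -> bool}) (i : 'I_6) c :
  \sum_(s : conf 6 n.+1 | (lk s 1 i == c) && subtree_leaves_eq x i s) weight th s =
  2^-1 * K th i c (subtree_leaves_eq x i) * \prod_(j < 6 | j != i) @K R th n j true xpredT.
Proof.
rewrite (bigID (fun s => lk s 0 0)) /=.
rewrite (eq_bigl (fun s => (lk s 0 0 == true) &&
        [forall j : 'I_6, if j == i then (lk s 1 i == c) && subtree_leaves_eq x i s else true])); last first.
  by move=> s; rewrite forall_if eqb_id andbC.
rewrite [X in _ + X](eq_bigl (fun s => (lk s 0 0 == false) &&
        [forall j : 'I_6, if j == i then (lk s 1 i == c) && subtree_leaves_eq x i s else true])); last first.
  by move=> s; rewrite forall_if eqbF_neg andbC.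
rewrite !Pr_child_b.
have := ed_sum1 th c; set a := ed th c true; set a' := ed th c false => e.
rewrite -[RHS]mulr1 -e; ring.
Qed.

Lemma ratio_lemma (R : realFieldType) (a K1 K0 : R) :
  0 <= a -> 0 <= K1 -> 0 <= K0 ->
  95%:R / 100%:R <= (a * K1) / (a * K1 + a * K0) -> 19%:R * K0 <= K1.
Proof.
move=> a0 k1 k0 H.
have [z|nz] := eqVneq (a * K1 + a * K0) 0.
  by move: H; rewrite z invr0 mulr0; lra.
have ps : 0 < a * K1 + a * K0.
  by rewrite lt_def nz /=; apply: addr_ge0; apply: mulr_ge0.
have ap : 0 < a.
  rewrite lt_def a0 andbT; apply/eqP => a00; move: nz; by rewrite a00 !mul0r addr0 eqxx.
move: H; rewrite ler_pdivlMr // => H.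
have : 0 <= a * (K1 * 5%:R - K0 * 95%:R) by lra.
by rewrite pmulr_rge0 //; lra.
Qed.

Lemma lam_bound (R : realFieldType) (g : nat) :
  (4 <= g <= 6)%N -> 19%:R <= (181%:R / 19%:R : R) ^+ g * (1 / 19%:R) ^+ (6 - g).
Proof.
case/andP; case: g => [|[|[|[|[|[|[|g]]]]]]] //= _ _; rewrite !exprS ?expr0; lra.
Qed.

Theorem mainTheorem18 (R : realFieldType) (d : nat)
    (x : {ffun 'I_(6 ^ d) -> bool}) :
  (1 <= d)%N ->
  (4 <= #|[set i : 'I_6 |
            (95%:R / 100%:R <=
              condPr (9%:R / 10%:R : R) (vertex_one 6 d 1 i)
                     (subtree_leaves_eq x i))%R]|)%N ->
  19%:R / 20%:R <= condPr (9%:R / 10%:R : R) (vertex_one 6 d 0 0) (leaves_eq x).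
Proof.
case: d x => [|n] x // _.
set th : R := 9%:R / 10%:R.
set S := [set i : 'I_6 | _].
move=> HS.
have hth : -1 < th < 1 by rewrite /th; apply/andP; split; lra.
pose K1 i := K th i true (subtree_leaves_eq x i).
pose K0 i := K th i false (subtree_leaves_eq x i).
have K1ge i : 0 <= K1 i by apply: K_ge0.
have K0ge i : 0 <= K0 i by apply: K_ge0.
have Kpos i : 0 < K1 i + K0 i by apply: Ksub_pos.
pose P i := \prod_(j < 6 | j != i) @K R th n j true xpredT.
have Pge i : 0 <= P i by apply: prodr_ge0 => j _; apply: K_ge0.
have good i : i \in S -> 19%:R * K0 i <= K1 i.
  rewrite inE /condPr => H.
  have num : Pr th [pred s | vertex_one 6 n.+1 1 i s && subtree_leaves_eq x i s]
      = 2^-1 * K1 i * P i.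
    rewrite /Pr -Pr_child; apply: eq_bigl => s; by rewrite /= eqb_id.
  have den : Pr th (subtree_leaves_eq x i) = 2^-1 * K1 i * P i + 2^-1 * K0 i * P i.
    rewrite /Pr -!Pr_child (bigID (fun s => lk s 1 i)) /=; congr (_ + _).
      by apply: eq_bigl => s; rewrite eqb_id andbC.
    by apply: eq_bigl => s; rewrite eqbF_neg andbC.
  rewrite num den in H.
  apply: (@ratio_lemma R (2^-1 * P i) (K1 i) (K0 i)) => //.
    by apply: mulr_ge0 => //; rewrite invr_ge0.
  by move: H; rewrite !(mulrAC _ _ (P i)).
pose u i := ed th true true * K1 i + ed th false true * K0 i.
pose v i := ed th true false * K1 i + ed th false false * K0 i.
have numR : Pr th [pred s | vertex_one 6 n.+1 0 0 s && leaves_eq x s] = 2^-1 * \prod_(i < 6) u i.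
  rewrite /Pr (eq_bigl (fun s => (lk s 0 0 == true) && leaves_eq x s)) ?Pr_root //.
  by move=> s; rewrite /= eqb_id.
have denR : Pr th (leaves_eq x) = 2^-1 * \prod_(i < 6) u i + 2^-1 * \prod_(i < 6) v i.
  rewrite /Pr (bigID (fun s => lk s 0 0)) /=; congr (_ + _).
    rewrite (eq_bigl (fun s => (lk s 0 0 == true) && leaves_eq x s)) ?Pr_root //.
    by move=> s; rewrite eqb_id andbC.
  rewrite (eq_bigl (fun s => (lk s 0 0 == false) && leaves_eq x s)) ?Pr_root //.
  by move=> s; rewrite eqbF_neg andbC.
pose lam i : R := if i \in S then 181%:R / 19%:R else 1 / 19%:R.
have uE i : u i = 19%:R / 20%:R * K1 i + 1 / 20%:R * K0 i.
  by rewrite /u /ed /= /th; congr (_ * _ + _ * _); field.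
have vE i : v i = 1 / 20%:R * K1 i + 19%:R / 20%:R * K0 i.
  by rewrite /v /ed /= /th; congr (_ * _ + _ * _); field.
have upos i : 0 < u i by rewrite uE; have := Kpos i; have := K1ge i; have := K0ge i; lra.
have vge i : 0 <= v i by rewrite vE; have := K1ge i; have := K0ge i; lra.
have lv i : 0 <= lam i * v i <= u i.
  rewrite uE vE /lam; have := K1ge i; have := K0ge i.
  case: ifP => [/good g|_]; last by lra.
  by move: g; lra.
have pin : \prod_(i < 6) lam i * \prod_(i < 6) v i <= \prod_(i < 6) u i.
  by rewrite -big_split; apply: ler_prod => i _; exact: lv.
have lamP : 19%:R <= \prod_(i < 6) lam i.
  rewrite (bigID (mem S)) /=.
  have e1 : \prod_(i in S) lam i = (181%:R / 19%:R) ^+ #|S|.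
    by rewrite -prodr_const; apply: eq_bigr => i; rewrite /lam => ->.
  have e2 : \prod_(i < 6 | i \notin S) lam i = (1 / 19%:R) ^+ (6 - #|S|).
    have -> : (6 - #|S| = #|~: S|)%N by rewrite -{1}(card_ord 6) -(cardsC S) addKn.
    rewrite -prodr_const; apply: eq_big => i; first by rewrite in_setC.
    by rewrite /lam => /negbTE ->.
  rewrite e1 e2.
  apply: lam_bound; rewrite HS /=.
  by have := max_card (mem S); rewrite card_ord.
have pv : 0 <= \prod_(i < 6) v i by apply: prodr_ge0 => i _.
have pu : 0 < \prod_(i < 6) u i by apply: prodr_gt0 => i _.
have h19 : 19%:R * \prod_(i < 6) v i <= \prod_(i < 6) u i.
  by apply: le_trans pin; apply: ler_wpM2r.
rewrite /condPr numR denR.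
move: pu pv h19; set U := \prod_(i < 6) u i; set V := \prod_(i < 6) v i => pu pv h19.
have h2 : 0 < (2^-1 : R) by rewrite invr_gt0.
have pos : 0 < 2^-1 * U + 2^-1 * V by apply: ltr_wpDr; [apply: mulr_ge0; lra | apply: mulr_gt0].
rewrite ler_pdivlMr //.
nra.
Qed.
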